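(* Let $k\ge 4$ be even and let $G$ be the $k$-uniform sunflower, with Laplacian tensor $\mathcal L$. Then $G$ is odd-bipartite, and $\lambda(\mathcal L)$ is the unique root in the interval $(2,4)$ of the equation $(\mu-2)-\left(\frac{1}{\mu-1}\right)^{\frac{1}{k-1}}-\left(\frac{1}{\mu-1}\right)^{k-1}=0$.
   Context: A $k$-uniform hypergraph $G=(V,E)$ ($k\ge 3$) is a simple undirected hypergraph with vertex set $V=[n]$ and a nonempty edge set $E$ of $k$-element subsets of $V$; $d_i$ denotes the number of edges containing vertex $i$. The $k$-uniform sunflower has vertex set $\{i_{j,s}: j\in[k-1], s\in[k]\}\cup\{i_k\}$ (all distinct) and edges $\{i_{j,1},\ldots,i_{j,k}\}$ for $j\in[k-1]$ together with $\{i_{1,1},i_{2,1},\ldots,i_{k-1,1},i_k\}$. The Laplacian tensor is $\mathcal L=\mathcal D-\mathcal A$, where $\mathcal A$ is the order-$k$ dimension-$n$ tensor with $a_{i_1\ldots i_k}=\frac1{(k-1)!}$ if $\{i_1,\ldots,i_k\}\in E$ and $0$ otherwise, and $\mathcal D$ is diagonal with $d_{i\ldots i}=d_i$; thus $(\mathcal L\mathbf x^{k-1})_i=d_ix_i^{k-1}-\sum_{e\in E,\,i\in e}\prod_{s\in e\setminus\{i\}}x_s$. A real $\lambda$ is an H-eigenvalue of $\mathcal L$ if some $\mathbf x\in\mathbb R^n\setminus\{0\}$ satisfies $(\mathcal L\mathbf x^{k-1})_i=\lambda x_i^{k-1}$ for all $i$; $\lambda(\mathcal L)$ is the largest H-eigenvalue.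 For even $k$, $G$ is odd-bipartite if $V$ can be partitioned into two nonempty disjoint sets $V_1,V_2$ such that every edge meets $V_1$ in an odd number of vertices. *)

(* Defs.v *)
From HB Require Import structures.
From mathcomp Require Import all_boot all_order all_algebra.
From mathcomp Require Import reals exp.
Set Implicit Arguments. Unset Strict Implicit. Unset Printing Implicit Defensive.
Import Order.TTheory GRing.Theory Num.Theory.
Local Open Scope ring_scope.

Section Hypergraph.
Variables (R : realType) (n k : nat) (E : {set {set 'I_n}}).

Definition k_uniform : Prop := E != set0 /\ forall e, e \in E -> #|e| = k.

Definition degree (i : 'I_n) : nat := #|[set e in E | i \in e]|.

Definition adj_entry (i : 'I_n) (f : {ffun 'I_k.-1 -> 'I_n}) : R :=
  if (i |: [set f j | j in 'I_k.-1]) \in E then ((k.-1)`!%:R)^-1 else 0.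

Definition adj_apply (x : 'I_n -> R) (i : 'I_n) : R :=
  \sum_(f : {ffun 'I_k.-1 -> 'I_n}) adj_entry i f * \prod_(j < k.-1) x (f j).

Definition lap_apply (x : 'I_n -> R) (i : 'I_n) : R :=
  (degree i)%:R * x i ^+ k.-1 - adj_apply x i.

Definition H_eigenvalue (lam : R) : Prop :=
  exists x : 'I_n -> R, (exists i, x i != 0) /\
    forall i, lap_apply x i = lam * x i ^+ k.-1.

Definition largest_H_eigenvalue (lam : R) : Prop :=
  H_eigenvalue lam /\ forall mu, H_eigenvalue mu -> mu <= lam.

Definition odd_bipartite : Prop :=
  exists V1 : {set 'I_n}, [/\ V1 != set0, ~: V1 != set0 &
    forall e, e \in E -> odd #|e :&: V1| ].

End Hypergraph.

(* k-uniform sunflower: vertex i_{j,s} (j in [k-1], s in [k]) is labelled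
   (j-1)*k + (s-1), and i_k is labelled (k-1)*k. *)
Definition sunflower_n (k : nat) : nat := (k.-1 * k).+1.

Definition sunflower_center (k : nat) : 'I_(sunflower_n k) :=
  @Ordinal (sunflower_n k) (k.-1 * k) (ltnSn _).

Definition sunflower_petal (k : nat) (j : nat) : {set 'I_(sunflower_n k)} :=
  [set v : 'I_(sunflower_n k) | ((v %/ k)%N == j) && (v < k.-1 * k)%N].

Definition sunflower_core (k : nat) : {set 'I_(sunflower_n k)} :=
  sunflower_center k |:
  [set v : 'I_(sunflower_n k) | ((v %% k)%N == 0%N) && (v < k.-1 * k)%N].

Definition sunflower_edges (k : nat) : {set {set 'I_(sunflower_n k)}} :=
  sunflower_core k |: [set sunflower_petal k j | j : 'I_k.-1].

Definition sunflower_eq (R : realType) (k : nat) (mu : R) : R :=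
  (mu - 2) - powR (mu - 1)^-1 ((k.-1)%:R^-1) - ((mu - 1)^-1) ^+ k.-1.

(* Main.v *)
Require Import Defs.
From HB Require Import structures.
From mathcomp Require Import all_boot all_order all_algebra.
From mathcomp Require Import reals exp.
From mathcomp Require Import zify ring lra.
From mathcomp Require Import polyrcf.
Import Order.TTheory GRing.Theory Num.Theory.
Local Open Scope ring_scope.
Set Implicit Arguments. Unset Strict Implicit. Unset Printing Implicit Defensive.

Section Adj.
Variables (R : realType) (n m : nat) (E : {set {set 'I_n}}).
Hypothesis Ecard : forall e, e \in E -> #|e| = m.+1.

Lemma img_prop (f : {ffun 'I_m -> 'I_n}) (i : 'I_n) e :
  e \in E -> i |: [set f j | j in 'I_m] = e ->
  [set f j | j in 'I_m] = e :\ i /\ {in 'I_m &, injective f}.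
Proof.
move=> eE def.
have c := Ecard eE; rewrite -def cardsU1 in c.
have le := leq_imset_card f 'I_m.
rewrite card_ord in le.
have [ni ci] : i \notin [set f j | j in 'I_m] /\ #|[set f j | j in 'I_m]| = m.
  case: (boolP (i \in [set f j | j in 'I_m])) => h; rewrite h /= in c.
    by move: c le; rewrite add0n => ->; rewrite ltnn.
  by split => //; move: c; rewrite add1n => -[].
split; first by rewrite -def setU1K.
apply/imset_injP; by rewrite ci card_ord.
Qed.

Lemma count_f (i : 'I_n) e : e \in E -> i \in e ->
  #|[set f : {ffun 'I_m -> 'I_n} | i |: [set f j | j in 'I_m] == e]| = m`!.
Proof.
move=> eE ie.
have ce : #|e :\ i| = m by have := Ecard eE; rewrite (cardsD1 i e) ie => /eqP; rewrite add1n eqSS => /eqP.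
rewrite -ffactnn.
have -> : [set f : {ffun 'I_m -> 'I_n} | i |: [set f j | j in 'I_m] == e] =
   [set f : {ffun 'I_m -> 'I_n} in ffun_on (mem (e :\ i)) | injectiveb f].
  apply/setP => f; rewrite !inE.
  apply/idP/idP.
  - move=> /eqP def; have [h1 h2] := img_prop eE def.
    apply/andP; split.
      apply/ffun_onP => j; rewrite -h1; apply: imset_f; by [].
    by apply/injectiveP => a b; apply: h2.
  - case/andP => /ffun_onP fon /injectiveP finj.
    have sub : [set f j | j in 'I_m] \subset e :\ i.
      by apply/subsetP => y /imsetP [j _ ->]; apply: fon.
    have eq : [set f j | j in 'I_m] = e :\ i.
      apply/eqP; rewrite eqEcard sub ce /=.
      rewrite card_imset ?card_ord //.
    by rewrite eq setD1K.
rewrite card_inj_ffuns_on ce card_ord //.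
Qed.


Lemma adj_formula (x : 'I_n -> R) i :
  adj_apply m.+1 E x i = \sum_(e in E | i \in e) \prod_(s in e :\ i) x s.
Proof.
rewrite /adj_apply /adj_entry /=.
set c := ((m`!)%:R : R)^-1.
transitivity (\sum_(f : {ffun 'I_m -> 'I_n}) \sum_(e in E | i \in e)
   (if i |: [set f j | j in 'I_m] == e then c * \prod_(j < m) x (f j) else 0)).
  apply: eq_bigr => f _.
  case: ifP => H.
    rewrite (bigD1 (i |: [set f j | j in 'I_m])) /=; last by rewrite H setU11.
    rewrite eqxx [X in _ + X]big1 ?addr0 // => e /andP [_ ne]; by rewrite eq_sym (negbTE ne).
  rewrite mul0r [RHS]big1 // => e /andP [eE _]; case: eqP => // def; by rewrite def eE in H.
rewrite exchange_big /=; apply: eq_bigr => e /andP [eE ie].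
rewrite -big_mkcond /=.
transitivity (\sum_(f : {ffun 'I_m -> 'I_n} | i |: [set f j | j in 'I_m] == e)
   c * \prod_(s in e :\ i) x s).
  apply: eq_bigr => f /eqP def; have [h1 h2] := img_prop eE def.
  by rewrite -h1 big_imset.
rewrite sumr_const.
have -> : #|[pred f : {ffun 'I_m -> 'I_n} | i |: [set f j | j in 'I_m] == e]| = m`!.
  by rewrite -(count_f eE ie); apply: eq_card => f; rewrite inE.
rewrite -mulr_natl mulrA /c mulfV ?mul1r //.
by rewrite pnatr_eq0 -lt0n fact_gt0.
Qed.


Lemma lap_mul (x : 'I_n -> R) i :
  lap_apply m.+1 E x i * x i =
  (#|[set e in E | i \in e]|)%:R * x i ^+ m.+1 -
  \sum_(e in [set e in E | i \in e]) \prod_(s in e) x s.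
Proof.
rewrite /lap_apply adj_formula mulrBl /degree -mulrA -exprSr; congr (_ - _).
rewrite mulr_suml; apply: eq_big => e; first by rewrite inE.
move=> /andP [_ ie]; rewrite (big_setD1 _ ie) /= mulrC //.
Qed.

End Adj.

Section SF.
Variable m : nat.
Hypothesis m_gt0 : (0 < m)%N.
Local Notation k := m.+1.
Local Notation V := ('I_(sunflower_n m.+1)).
Local Notation pet := (sunflower_petal m.+1).
Local Notation core := (sunflower_core m.+1).
Local Notation z := (sunflower_center m.+1).
Local Notation EE := (sunflower_edges m.+1).

Lemma in_pet (v : V) j : (v \in pet j) = (v %/ k == j)%N && (v < m * k)%N.
Proof. by rewrite inE. Qed.

Lemma in_core (v : V) : (v \in core) = (v == z) || ((v %% k == 0)%N && (v < m * k)%N).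
Proof. by rewrite !inE. Qed.

Lemma val_z : val z = (m * k)%N. Proof. by []. Qed.

Lemma v_le (v : V) : (v <= m * k)%N.
Proof. by rewrite -ltnS; exact: ltn_ord. Qed.

Lemma v_cases (v : V) : v = z \/ (v < m * k)%N.
Proof.
have := v_le v; rewrite leq_eqVlt => /orP [/eqP h|h]; last by right.
by left; apply: val_inj; rewrite /= h.
Qed.

Lemma z_not_pet j : z \notin pet j.
Proof. by rewrite in_pet val_z ltnn andbF. Qed.

Lemma pet_neq_core j : pet j != core.
Proof.
apply/negP => /eqP h; have := z_not_pet j; by rewrite h in_core eqxx.
Qed.

Definition hub (j : nat) : V := inord (j * k).

Lemma val_hub j : (j < m)%N -> val (hub j) = (j * k)%N.
Proof. by move=> jm; rewrite /hub /= inordK // ltnS leq_pmul2r // ltnW. Qed.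

Lemma hub_in_pet j : (j < m)%N -> hub j \in pet j.
Proof. by move=> jm; rewrite in_pet val_hub // mulnK // eqxx ltn_pmul2r. Qed.

Lemma hub_in_core j : (j < m)%N -> hub j \in core.
Proof. by move=> jm; rewrite in_core val_hub // modnMl eqxx ltn_pmul2r // jm orbT. Qed.

Lemma hub_neq_z j : (j < m)%N -> hub j != z.
Proof.
move=> jm; apply/negP => /eqP /(congr1 val); rewrite val_hub // val_z => /eqP.
by rewrite eqn_pmul2r // => /eqP h; move: jm; rewrite h ltnn.
Qed.

Lemma in_EE e : (e \in EE) = (e == core) || [exists j : 'I_m, e == pet j].
Proof.
rewrite /sunflower_edges !inE; congr orb.
apply/imsetP/existsP => [[j _ ->]|[j /eqP ->]]; by exists j.
Qed.

Lemma pet_in_EE j : (j < m)%N -> pet j \in EE.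
Proof. move=> jm; rewrite in_EE; apply/orP; right; apply/existsP; by exists (Ordinal jm). Qed.

Lemma core_in_EE : core \in EE.
Proof. by rewrite in_EE eqxx. Qed.

Lemma div_lt (v : V) : (v < m * k)%N -> (v %/ k < m)%N.
Proof. by move=> h; rewrite ltn_divLR. Qed.

Lemma edges_center : [set e in EE | z \in e] = [set core].
Proof.
apply/setP => e; rewrite in_set in_set1 in_EE; apply/idP/idP.
  case/andP => /orP [/eqP-> _ | /existsP [j /eqP ->]]; first by rewrite eqxx.
  by rewrite (negbTE (z_not_pet j)).
by move/eqP->; rewrite eqxx in_core eqxx.
Qed.

Lemma edges_leaf (v : V) : (v < m * k)%N -> (v %% k != 0)%N ->
  [set e in EE | v \in e] = [set pet (v %/ k)].
Proof.
move=> vlt vm; apply/setP => e; rewrite in_set in_set1 in_EE; apply/idP/idP.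
  case/andP => /orP [/eqP-> | /existsP [j /eqP ->]].
    by rewrite in_core (negbTE vm) /= orbF => /eqP vz; move: vlt; rewrite vz val_z ltnn.
  by rewrite in_pet => /andP [/eqP -> _].
move/eqP->; rewrite in_pet eqxx vlt andbT.
rewrite andbT; apply/orP; right; apply/existsP; exists (Ordinal (div_lt vlt)); by [].
Qed.

Lemma edges_hub (v : V) : (v < m * k)%N -> (v %% k == 0)%N ->
  [set e in EE | v \in e] = [set pet (v %/ k); core].
Proof.
move=> vlt vm; apply/setP => e; rewrite in_set in_set2 in_EE; apply/idP/idP.
  case/andP => /orP [/eqP-> | /existsP [j /eqP ->]]; first by rewrite eqxx orbT.
  by rewrite in_pet => /andP [/eqP -> _]; rewrite eqxx.
case/orP => /eqP->.
  rewrite in_pet eqxx vlt andbT.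
  rewrite andbT; apply/orP; right; apply/existsP; exists (Ordinal (div_lt vlt)); by [].
by rewrite eqxx in_core vm vlt orbT.
Qed.

Lemma pet_img j : (j < m)%N ->
  pet j = [set (inord (j * k + val s) : V) | s : 'I_k].
Proof.
move=> jm; apply/setP => v; rewrite in_pet; apply/andP/imsetP.
  case=> /eqP vj vlt; exists (Ordinal (ltn_pmod v (ltn0Sn m))) => //.
  apply: val_inj; rewrite /= inordK; first by rewrite -vj -divn_eq.
  by rewrite -vj -divn_eq ltnS v_le.
have lt1 : forall s : 'I_k, (j * k + s < m * k)%N.
  move=> s; apply: (@leq_trans (j.+1 * k)); first by rewrite mulSn addnC ltn_add2r.
  by rewrite leq_pmul2r.
case=> s _ ->; rewrite /= inordK; last by rewrite ltnS ltnW.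
by rewrite divnMDl // divn_small // addn0 eqxx lt1.
Qed.

Lemma card_pet j : (j < m)%N -> #|pet j| = k.
Proof.
move=> jm; rewrite pet_img // card_imset ?card_ord //.
have lt1 : forall s : 'I_k, (j * k + s < (m * k).+1)%N.
  move=> s; apply: (@leq_trans (j.+1 * k)); first by rewrite mulSn addnC ltn_add2r.
  by apply: leqW; rewrite leq_pmul2r.
move=> s t /(congr1 val); rewrite /= !inordK // => /eqP; rewrite eqn_add2l => /eqP.
exact: val_inj.
Qed.

Lemma core_img : core = z |: [set hub (val j) | j : 'I_m].
Proof.
apply/setP => v; rewrite in_core !inE; congr orb; apply/andP/imsetP.
  case=> /eqP vm vlt; exists (Ordinal (div_lt vlt)) => //.
  apply: val_inj; rewrite val_hub ?div_lt //=.
  by rewrite {1}(divn_eq v k) vm addn0.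
case=> j _ ->; rewrite val_hub ?ltn_ord // modnMl ltn_pmul2r // ltn_ord eqxx; by [].
Qed.

Lemma card_core : #|core| = k.
Proof.
rewrite core_img cardsU1 card_imset ?card_ord.
  have -> : z \notin [set hub (val j) | j : 'I_m] = true.
    apply/negP => /imsetP [j _ /eqP]; rewrite eq_sym; by rewrite (negbTE (hub_neq_z (ltn_ord j))).
  by [].
move=> i j /(congr1 val); rewrite !val_hub ?ltn_ord // => /eqP; rewrite eqn_pmul2r // => /eqP.
exact: val_inj.
Qed.

Lemma EE_card e : e \in EE -> #|e| = k.
Proof.
rewrite in_EE => /orP [/eqP -> | /existsP [j /eqP ->]]; first exact: card_core.
exact: card_pet.
Qed.


Lemma big_pet (R : realType) (F : V -> R) j : (j < m)%N ->
  \prod_(s in pet j) F s = F (hub j) * \prod_(s in pet j :\ hub j) F s.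
Proof. by move=> jm; rewrite (big_setD1 _ (hub_in_pet jm)). Qed.

Lemma big_core (R : realType) (F : V -> R) :
  \prod_(s in core) F s = F z * \prod_(s in core :\ z) F s.
Proof. by rewrite (big_setD1 _ (_ : z \in core)) // in_core eqxx. Qed.

Lemma leafP j s : (j < m)%N -> s \in pet j :\ hub j ->
  [/\ (s < m * k)%N, (s %% k != 0)%N & (s %/ k = j)%N].
Proof.
move=> jm; rewrite in_setD1 in_pet => /and3P [ns /eqP sj slt]; split => //.
apply/negP => /eqP sm; move/negP: ns; apply; apply/eqP; apply: val_inj.
by rewrite val_hub // /= {1}(divn_eq s k) sm addn0 sj.
Qed.

Lemma card_leaves j : (j < m)%N -> #|pet j :\ hub j| = m.
Proof.
move=> jm; have := card_pet jm; rewrite (cardsD1 (hub j)) hub_in_pet //.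
by rewrite add1n => -[].
Qed.

Lemma hubP s : s \in core :\ z -> (s < m * k)%N /\ (s %% k == 0)%N.
Proof.
by rewrite in_setD1 in_core => /andP [nz /orP [sz|/andP [h1 h2]]]; [rewrite sz in nz|].
Qed.

Lemma card_hubs : #|core :\ z| = m.
Proof.
have := card_core; rewrite (cardsD1 z) (_ : z \in core) ?in_core ?eqxx //.
by rewrite add1n => -[].
Qed.

Section Lap.
Variables (R : realType) (x : V -> R).
Definition PP j := \prod_(s in pet j) x s.
Definition PC := \prod_(s in core) x s.

Lemma lap_center : lap_apply k EE x z * x z = x z ^+ k - PC.
Proof.
rewrite lap_mul; last exact: EE_card.
by rewrite edges_center cards1 big_set1 mul1r.
Qed.

Lemma lap_leaf (v : V) : (v < m * k)%N -> (v %% k != 0)%N ->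
  lap_apply k EE x v * x v = x v ^+ k - PP (v %/ k).
Proof.
move=> h1 h2; rewrite lap_mul; last exact: EE_card.
by rewrite edges_leaf // cards1 big_set1 mul1r.
Qed.

Lemma lap_hub (v : V) : (v < m * k)%N -> (v %% k == 0)%N ->
  lap_apply k EE x v * x v = 2%:R * x v ^+ k - (PP (v %/ k) + PC).
Proof.
move=> h1 h2; rewrite lap_mul; last exact: EE_card.
rewrite edges_hub // cards2 pet_neq_core big_setU1 //= ?big_set1 //.
by rewrite in_set1 pet_neq_core.
Qed.
End Lap.

Lemma powR_root (R : realType) (y : R) : 0 <= y -> (powR y (m%:R^-1)) ^+ m = y.
Proof.
move=> y0; rewrite -powR_mulrn ?powR_ge0 // -powRrM mulVf ?powRr1 //.
by rewrite pnatr_eq0 -lt0n.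
Qed.

Lemma hub_in_hubs j : (j < m)%N -> hub j \in core :\ z.
Proof. by move=> jm; rewrite in_setD1 hub_neq_z // hub_in_core. Qed.

Lemma hub_of (s : V) : (s < m * k)%N -> (s %% k == 0)%N -> hub (s %/ k) = s.
Proof.
move=> h1 h2; apply: val_inj; rewrite val_hub ?div_lt //.
by rewrite /= {2}(divn_eq s k) (eqP h2) addn0.
Qed.

Lemma eig_bound (R : realType) (mu : R) (x : V -> R) :
  odd m -> (exists i, x i != 0) ->
  (forall i, lap_apply k EE x i = mu * x i ^+ m) ->
  2 < mu -> sunflower_eq k mu <= 0.
Proof.
move=> om [i0 xi0] eig mu2.
rewrite leNgt; apply/negP; rewrite /sunflower_eq /=.
set a := mu - 1; set r := powR a^-1 m%:R^-1; set c := a^-1 ^+ m => eqpos.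
set D := mu - 2 - c.
have a0 : 0 < a by rewrite /a; lra.
have r0 : 0 <= r by apply: powR_ge0.
have Dr : r < D by rewrite /D; lra.
have D0 : 0 < D by lra.
have rm : r ^+ m = a^-1 by apply: powR_root; rewrite invr_ge0 ltW.
have ke : ~~ odd k by rewrite /= om.
have X0 s : 0 <= x s ^+ k by apply: exprn_even_ge0.
have eqm s : lap_apply k EE x s * x s = mu * x s ^+ k by rewrite eig -mulrA -exprSr.
have Pleaf (s : V) : (s < m * k)%N -> (s %% k != 0)%N -> PP x (s %/ k) = - a * x s ^+ k.
  move=> h1 h2; have := eqm s; rewrite lap_leaf // /a => h; lra.
have Phub (s : V) : (s < m * k)%N -> (s %% k == 0)%N -> (2 - mu) * x s ^+ k = PP x (s %/ k) + PC x.
  move=> h1 h2; have := eqm s; rewrite lap_hub // => h; lra.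
have Pz : PC x = - a * x z ^+ k.
  have := eqm z; rewrite lap_center /a => h; lra.
have evenN (y : R) : (- y) ^+ k = y ^+ k.
  by rewrite exprNn -signr_odd (negbTE ke) expr0 mul1r.
have petb j : (j < m)%N -> - PP x j <= x (hub j) ^+ k * c.
  move=> jm; set Q := - PP x j.
  have lX s : s \in pet j :\ hub j -> x s ^+ k = Q / a.
    move=> sin; have [h1 h2 h3] := leafP jm sin.
    have := Pleaf s h1 h2; rewrite h3 /Q => ->.
    by field; rewrite gt_eqF.
  have PPk : Q ^+ k = x (hub j) ^+ k * (Q / a) ^+ m.
    have -> : Q ^+ k = \prod_(s in pet j) x s ^+ k by rewrite /Q evenN /PP prodrXl.
    rewrite (big_pet _ jm); congr (_ * _).
    by rewrite (eq_bigr (fun _ => Q / a)) // prodr_const card_leaves.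
  have cE : c = (a ^+ m)^-1 by rewrite /c exprVn.
  have [Q0|Qn0] := eqVneq Q 0.
    by rewrite Q0 mulr_ge0 // /c exprn_ge0 // invr_ge0 ltW.
  suff -> : Q = x (hub j) ^+ k * c by [].
  apply: (mulIf (_ : Q ^+ m != 0)); first by rewrite expf_eq0 (negbTE Qn0) andbF.
  by rewrite -exprS PPk expr_div_n cE; field; rewrite expf_eq0 gt_eqF // andbF.
have hubb s : s \in core :\ z -> D * x s ^+ k <= - PC x.
  move=> /hubP [h1 h2]; have := petb _ (div_lt h1); rewrite hub_of // => hb.
  have := Phub s h1 h2; rewrite /D => hp; nra.
have [PC0|PCn0] := eqVneq (PC x) 0.
  have hz s : s \in core :\ z -> x s = 0.
    move=> sin; have := hubb s sin; rewrite PC0 oppr0 => h.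
    have : x s ^+ k == 0 by rewrite eq_le X0 andbT; nra.
    by rewrite expf_eq0 => /andP [_ /eqP].
  move/negP: xi0; apply; apply/eqP.
  have [->|lt] := v_cases i0.
    have : x z ^+ k == 0 by move: Pz; rewrite PC0 => h; apply/eqP; nra.
    by rewrite expf_eq0 => /andP [_ /eqP].
  have [hm|hm] := boolP (i0 %% k == 0)%N.
    by apply: hz; rewrite -(hub_of lt hm) hub_in_hubs // div_lt.
  have : PP x (i0 %/ k) = 0.
    by rewrite /PP (big_pet _ (div_lt lt)) hz ?mul0r // hub_in_hubs // div_lt.
  rewrite Pleaf // => h.
  have : x i0 ^+ k == 0 by apply/eqP; nra.
  by rewrite expf_eq0 => /andP [_ /eqP].
set Q := - PC x.
have Q0 : 0 < Q.
  rewrite /Q lt0r oppr_eq0 PCn0 /= Pz; have := X0 z; nra.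
have Xz : x z ^+ k = Q / a by rewrite /Q Pz; field; rewrite gt_eqF.
have hX s : s \in core :\ z -> 0 <= x s ^+ k <= Q / D.
  move=> sin; rewrite X0 /= ler_pdivlMr // mulrC; exact: hubb.
have PCk : Q ^+ k <= Q / a * (Q / D) ^+ m.
  have -> : Q ^+ k = \prod_(s in core) x s ^+ k by rewrite /Q evenN /PC prodrXl.
  rewrite big_core Xz ler_pM2l ?divr_gt0 //.
  rewrite -[in X in _ <= X](card_hubs) -prodr_const; exact: ler_prod.
have Dm : a^-1 < D ^+ m by rewrite -rm ltrXn2r // -lt0n.
have Qk : 0 < Q ^+ k by apply: exprn_gt0.
move: PCk; rewrite expr_div_n exprS.
have Dm0 : 0 < D ^+ m by apply: exprn_gt0.
have : 1 < a * D ^+ m.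
  have aa : a * a^-1 = 1 by rewrite mulfV ?gt_eqF.
  nra.
move=> h1 h2.
have : Q * Q ^+ m * (a * D ^+ m) <= Q * Q ^+ m.
  have e : Q / a * (Q ^+ m / D ^+ m) * (a * D ^+ m) = Q * Q ^+ m.
    by field; rewrite !gt_eqF.
  have U0 : 0 < a * D ^+ m by rewrite mulr_gt0.
  nra.
rewrite -exprS => h3; nra.
Qed.

Lemma sf_mono (R : realType) (u v : R) : 1 < u -> u < v ->
  sunflower_eq k u < sunflower_eq k v.
Proof.
move=> u1 uv; rewrite /sunflower_eq /=.
have a10 : 0 < u - 1 by lra.
have a20 : 0 < v - 1 by lra.
have i12 : (v - 1)^-1 < (u - 1)^-1 by rewrite ltf_pV2 ?posrE //; lra.
have c12 : (v - 1)^-1 ^+ m <= (u - 1)^-1 ^+ m.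
  by apply: lerXn2r; rewrite ?nnegrE ?invr_ge0 ?ltW.
have r12 : powR (v - 1)^-1 m%:R^-1 <= powR (u - 1)^-1 m%:R^-1.
  rewrite leNgt; apply/negP => h.
  have := ltrXn2r m (powR_ge0 _ _) h; rewrite -lt0n m_gt0 !powR_root ?invr_ge0 ?ltW //.
  by rewrite ltNge (ltW i12).
lra.
Qed.

Lemma sf_root (R : realType) : exists lam : R, 2 < lam < 4 /\ sunflower_eq k lam = 0.
Proof.
pose p : {poly R} := 'X^(m * k) + 'X^k + 'X^m - 1.
have pE y : p.[y] = (y ^+ m) ^+ k + y ^+ m * y + y ^+ m - 1.
  by rewrite /p !hornerE exprM (exprSr y m).
set r0 := powR (3^-1 : R) m%:R^-1.
have h3 : (0:R) < 3 by lra.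
have h3i : (3:R) * 3^-1 = 1 by rewrite mulfV // gt_eqF.
have r0m : r0 ^+ m = 3^-1 by apply: powR_root; rewrite invr_ge0.
have r00 : 0 < r0 by apply: powR_gt0; rewrite invr_gt0.
have r01 : r0 < 1.
  rewrite ltNge; apply/negP => h; have := exprn_ege1 m h; rewrite r0m.
  by rewrite invf_ge1 //; lra.
have t0 : (3^-1 : R) ^+ k <= 3^-1.
  rewrite exprS ler_piMr ?invr_ge0 // exprn_ile1 ?invr_ge0 //.
  by rewrite invf_le1; lra.
have pr0 : p.[r0] < 0.
  rewrite pE r0m; have : (0:R) < 3^-1 by rewrite invr_gt0.
  nra.
have p1 : p.[1] = 2 by rewrite pE !expr1n; lra.
have hneg : p.[r0] * p.[1] < 0 by rewrite p1; nra.
have [y] := @poly_ivtoo R p r0 1 (ltW r01) hneg.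
rewrite in_itv /= => /andP [y0 y1] /eqP py.
have y00 : 0 < y by lra.
set s := y ^+ m.
have s0 : 0 < s by apply: exprn_gt0.
have s1 : s < 1 by rewrite /s exprn_ilt1 ?ltW // -lt0n.
have s3 : 3^-1 < s by rewrite -r0m /s ltrXn2r ?ltW // -lt0n.
have ss : s * s^-1 = 1 by rewrite mulfV ?gt_eqF.
have si0 : 0 < s^-1 by rewrite invr_gt0.
exists (s^-1 + 1); split.
  apply/andP; split; first by have := s1; rewrite -invf_gt1 //; lra.
  nra.
rewrite /sunflower_eq /= (_ : s^-1 + 1 - 1 = s^-1); last by ring.
rewrite invrK.
have -> : powR s m%:R^-1 = y.
  by rewrite /s -powR_mulrn ?ltW // -powRrM mulfV ?powRr1 ?ltW // pnatr_eq0 -lt0n.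
move: py; rewrite pE -/s exprS => py.
apply: (mulfI (_ : s != 0)); first by rewrite gt_eqF.
rewrite mulr0.
transitivity (s * s^-1 - s - s * y - s * s ^+ m); first by ring.
rewrite ss; lra.
Qed.

Lemma hubmod j : (j < m)%N -> ((hub j) %% k == 0)%N.
Proof. by move=> jm; rewrite val_hub // modnMl. Qed.

Lemma sf_eigvec (R : realType) (lam : R) : odd m -> 2 < lam ->
  sunflower_eq k lam = 0 -> H_eigenvalue k EE lam.
Proof.
move=> om l2; rewrite /sunflower_eq /=.
set a := lam - 1; set r := powR a^-1 m%:R^-1 => eql.
have a0 : 0 < a by rewrite /a; lra.
have rm : r ^+ m = a^-1 by apply: powR_root; rewrite invr_ge0 ltW.
have r0 : 0 < r by apply: powR_gt0; rewrite invr_gt0.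
pose x (v : V) : R := if v == z then a * r else if (val v %% k == 0)%N then - a else 1.
have Nm : (- a) ^+ m = - a ^+ m.
  by rewrite exprNn -signr_odd om expr1 mulN1r.
have xP j : (j < m)%N -> PP x j = - a.
  move=> jm; rewrite /PP (big_pet _ jm) /x (negbTE (hub_neq_z jm)) hubmod //.
  rewrite big1 ?mulr1 // => s sin; have [h1 h2 _] := leafP jm sin.
  have -> : (s == z) = false.
    by apply/negP => /eqP sz; move: h1; rewrite sz val_z ltnn.
  by rewrite (negbTE h2).
have xC : PC x = a * r * - a ^+ m.
  rewrite /PC big_core /x eqxx -Nm; congr (_ * _); rewrite -[in RHS]card_hubs -prodr_const.
  apply: eq_bigr => s /hubP [h1 h2]; rewrite h2.
  have -> : (s == z) = false.
    by apply/negP => /eqP sz; move: h1; rewrite sz val_z ltnn.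
  by [].
exists x; split; first by exists z; rewrite /x eqxx mulf_neq0 // gt_eqF.
move=> v.
have xv0 : x v != 0.
  rewrite /x; case: ifP => _; first by rewrite mulf_neq0 // gt_eqF.
  by case: ifP => _; rewrite ?oppr_eq0 ?gt_eqF ?oner_neq0.
apply: (mulIf xv0); rewrite -mulrA -exprSr.
have [->|lt] := v_cases v.
  rewrite lap_center xC /x eqxx.
  rewrite !exprS exprMn rm /a; field; lra.
have vz : (v == z) = false.
  by apply/negP => /eqP sz; move: lt; rewrite sz val_z ltnn.
have [hm|hm] := boolP (val v %% k == 0)%N.
  rewrite lap_hub // xP ?div_lt // xC /x vz hm exprS Nm.
  have rE : r = lam - 2 - (a ^+ m)^-1 by rewrite -exprVn; lra.
  rewrite rE /a; field.
  by rewrite expf_eq0 m_gt0 /=; apply/negP => /eqP; lra.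
rewrite lap_leaf // xP ?div_lt // /x vz (negbTE hm) expr1n /a; lra.
Qed.

Lemma sf_uniform : k_uniform k EE.
Proof.
split; last exact: EE_card.
by apply/set0Pn; exists core; exact: core_in_EE.
Qed.

Lemma sf_bip : odd m -> odd_bipartite EE.
Proof.
move=> om; exists (core :\ z); split.
- by apply/set0Pn; exists (hub 0); apply: hub_in_hubs.
- by apply/set0Pn; exists z; rewrite in_setC in_setD1 eqxx.
move=> e; rewrite in_EE => /orP [/eqP -> | /existsP [j /eqP ->]].
  by rewrite (setIidPr (subsetDl _ _)) card_hubs.
have -> : pet j :&: (core :\ z) = [set hub j].
  apply/setP => s; rewrite in_setI in_set1; apply/idP/idP.
    case/andP => sp /hubP [h1 h2]; rewrite -(hub_of h1 h2).
    by move: sp; rewrite in_pet => /andP [/eqP -> _].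
  by move/eqP ->; rewrite hub_in_pet // hub_in_hubs.
by rewrite cards1.
Qed.

End SF.

Theorem proposition3p4 (R : realType) (k : nat) :
  (4 <= k)%N -> ~~ odd k ->
  k_uniform k (sunflower_edges k) /\
  odd_bipartite (sunflower_edges k) /\
  exists lam : R,
    [/\ 2 < lam < 4, sunflower_eq k lam = 0,
        (forall mu : R, 2 < mu < 4 -> sunflower_eq k mu = 0 -> mu = lam) &
        largest_H_eigenvalue k (sunflower_edges k) lam].
Proof.
case: k => [//|m] k4 ke.
have m0 : (0 < m)%N by move: k4; rewrite ltnS => /(leq_trans _); apply.
have om : odd m by move: ke => /=; rewrite negbK.
split; first exact: sf_uniform.
split; first exact: sf_bip.
have [lam [/andP [l2 l4] el]] := sf_root m0 R.
exists lam; split => //.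
- by apply/andP.
- move=> mu /andP [m2 m4] emu.
  have [h|h|h] := ltgtP mu lam => //.
    have l1 : 1 < mu by lra.
    by have := sf_mono m0 l1 h; rewrite emu el ltxx.
  have l1 : 1 < lam by lra.
  by have := sf_mono m0 l1 h; rewrite emu el ltxx.
split; first exact: sf_eigvec.
move=> mu [x [nz eig]].
rewrite leNgt; apply/negP => h.
have mu2 : 2 < mu by lra.
have := eig_bound m0 om nz eig mu2.
have l1 : 1 < lam by lra.
have := sf_mono m0 l1 h; rewrite el => h1 h2.
lra.
Qed.
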